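(* Let $n$ be an odd positive integer, $n_1=\lceil n/2\rceil$, $n_0=\lfloor n/2\rfloor$, and let $k\in K=\mathrm{GL}_2(\mathfrak{o})$. Then (1) $l(k\,a(\varpi^{n_1}))\ge n_1$ if and only if $k\in N(\mathfrak{o})K^0(\mathfrak{p})$; (2) $l(k\,a(\varpi^{n_1}))\le n_0$ if and only if $k\in wK^0(\mathfrak{p})$.
   Context: $F$ is a non-archimedean local field of characteristic $0$ with ring of integers $\mathfrak{o}$, maximal ideal $\mathfrak{p}$, uniformizer $\varpi$, residue field of size $q$, valuation $v$; $U_j=\{x\in\mathfrak{o}^\times: v(x-1)\ge j\}$ ($U_0=\mathfrak o^\times$). $G=\mathrm{GL}_2(F)$, $K=\mathrm{GL}_2(\mathfrak{o})$, $w=\begin{pmatrix}0&1\\-1&0\end{pmatrix}$, $a(y)=\mathrm{diag}(y,1)$, $n(x)=\begin{pmatrix}1&x\\0&1\end{pmatrix}$, $Z$ the center, $N=\{n(x):x\in F\}$, $N(\mathfrak o)=\{n(x):x\in\mathfrak o\}$, $K_1(\mathfrak{p}^n)=K\cap\begin{pmatrix}1+\mathfrak{p}^n&\mathfrak{o}\\\mathfrak{p}^n&\mathfrak{o}\end{pmatrix}$, $K^0(\mathfrak{p})=K\cap\begin{pmatrix}\mathfrak{o}&\mathfrak{p}\\\mathfrak{o}&\mathfrak{o}\end{pmatrix}$. There is a disjoint decomposition $G=\bigsqcup_{t\in\mathbb{Z}}\bigsqcup_{0\le l\le n}\bigsqcup_{v\in\mathfrak{o}^\times/U_{\min(l,n-l)}}ZN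 a(\varpi^t)wn(\varpi^{-l}v)K_1(\mathfrak{p}^n)$; for $g\in G$, $t(g)$ and $l(g)$ denote the unique integers with $0\le l(g)\le n$ and $g\in ZNa(\varpi^{t(g)})wn(\varpi^{-l(g)}v)K_1(\mathfrak{p}^n)$ for some $v\in\mathfrak{o}^\times$. *)

(* Defs.v *)
From HB Require Import structures.
From mathcomp Require Import all_boot all_order all_algebra.
Set Implicit Arguments. Unset Strict Implicit. Unset Printing Implicit Defensive.
Import Order.TTheory GRing.Theory Num.Theory.
Local Open Scope ring_scope.

Section LocalField.
Variables (F : fieldType) (v : F -> int) (pi : F).

(* x lies in p^j (j : int); 0 lies in every p^j. *)
Definition inP (j : int) (x : F) : bool := (x == 0) || (j <= v x).
Definition inO (x : F) : bool := inP 0 x.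
Definition isUnitO (x : F) : bool := (x != 0) && (v x == 0).
Definition inU (j : nat) (x : F) : bool := isUnitO x && inP j%:Z (x - 1).

(* v is a discrete valuation on F^x (its value at 0 is irrelevant),
   pi is a uniformizer. *)
Definition is_discrete_valuation : Prop :=
  [/\ forall x y, x != 0 -> y != 0 -> v (x * y) = v x + v y,
      forall x y, x != 0 -> y != 0 -> x + y != 0 -> Num.min (v x) (v y) <= v (x + y),
      pi != 0 & v pi = 1].

Definition complete_v : Prop :=
  forall u : nat -> F,
    (forall m : int, exists N, forall i j, (N <= i)%N -> (N <= j)%N -> inP m (u i - u j)) ->
    exists L, forall m : int, exists N, forall i, (N <= i)%N -> inP m (u i - L).

Definition finite_residue : Prop :=
  exists s : seq F, all inO s /\
    forall x, inO x -> exists2 r, r \in s & inP 1 (x - r).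

Definition nonarch_local_field_char0 : Prop :=
  [/\ is_discrete_valuation, complete_v, finite_residue & [pchar F] =i pred0].

Definition mx2 (a b c d : F) : 'M[F]_2 :=
  \matrix_(i < 2, j < 2)
    if (i == 0 :> nat) then (if (j == 0 :> nat) then a else b)
    else (if (j == 0 :> nat) then c else d).

Definition e00 (A : 'M[F]_2) := A ord0 ord0.
Definition e01 (A : 'M[F]_2) := A ord0 ord_max.
Definition e10 (A : 'M[F]_2) := A ord_max ord0.
Definition e11 (A : 'M[F]_2) := A ord_max ord_max.

Definition wmx : 'M[F]_2 := mx2 0 1 (-1) 0.
Definition amx (y : F) : 'M[F]_2 := mx2 y 0 0 1.
Definition nmx (x : F) : 'M[F]_2 := mx2 1 x 0 1.

Definition inK (A : 'M[F]_2) : Prop :=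
  [/\ inO (e00 A), inO (e01 A), inO (e10 A), inO (e11 A) & isUnitO (\det A)].

Definition inK1 (n : nat) (A : 'M[F]_2) : Prop :=
  inK A /\ inP n%:Z (e00 A - 1) /\ inP n%:Z (e10 A).

Definition inK0p (A : 'M[F]_2) : Prop := inK A /\ inP 1 (e01 A).

Definition in_cell (n : nat) (t : int) (l : nat) (g : 'M[F]_2) : Prop :=
  exists (z x u : F) (k : 'M[F]_2),
    [/\ z != 0, isUnitO u, inK1 n k &
        g = z%:M *m nmx x *m amx (pi ^ t) *m wmx *m nmx (pi ^- l * u) *m k].

Definition has_l (n : nat) (g : 'M[F]_2) (l : nat) : Prop :=
  (l <= n)%N /\ exists t : int, in_cell n t l g.

Definition in_NoK0p (k : 'M[F]_2) : Prop :=
  exists x k0, [/\ inO x, inK0p k0 & k = nmx x *m k0].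
Definition in_wK0p (k : 'M[F]_2) : Prop :=
  exists k0, inK0p k0 /\ k = wmx *m k0.

End LocalField.

(* Main.v *)
Require Import Defs.
From HB Require Import structures.
From mathcomp Require Import all_boot all_order all_algebra.
From mathcomp Require Import ring lra zify.
Import Order.TTheory GRing.Theory Num.Theory.
Set Implicit Arguments. Unset Strict Implicit. Unset Printing Implicit Defensive.
Local Open Scope ring_scope.

Section M.
Variable F : fieldType.

Lemma mx2E (a b c d : F) :
  [/\ e00 (mx2 a b c d) = a, e01 (mx2 a b c d) = b,
      e10 (mx2 a b c d) = c & e11 (mx2 a b c d) = d].
Proof. by rewrite /e00 /e01 /e10 /e11 !mxE. Qed.

Lemma e00_mx2 (a b c d : F) : e00 (mx2 a b c d) = a. Proof. by rewrite /e00 mxE. Qed.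
Lemma e01_mx2 (a b c d : F) : e01 (mx2 a b c d) = b. Proof. by rewrite /e01 mxE. Qed.
Lemma e10_mx2 (a b c d : F) : e10 (mx2 a b c d) = c. Proof. by rewrite /e10 mxE. Qed.
Lemma e11_mx2 (a b c d : F) : e11 (mx2 a b c d) = d. Proof. by rewrite /e11 mxE. Qed.
Definition e_mx2 := (e00_mx2, e01_mx2, e10_mx2, e11_mx2).

Lemma mx2_eta (A : 'M[F]_2) : A = mx2 (e00 A) (e01 A) (e10 A) (e11 A).
Proof.
apply/matrixP => i j; rewrite mxE /e00 /e01 /e10 /e11.
case: i => [[|[|i]] Hi] //; case: j => [[|[|j]] Hj] //=;
  by congr (A _ _); apply: val_inj.
Qed.

Lemma mulmx2 (a b c d a' b' c' d' : F) :
  mx2 a b c d *m mx2 a' b' c' d' =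
  mx2 (a * a' + b * c') (a * b' + b * d') (c * a' + d * c') (c * b' + d * d').
Proof.
apply/matrixP => i j; rewrite !mxE !big_ord_recl big_ord0 !mxE /=.
case: i => [[|[|i]] Hi] //; case: j => [[|[|j]] Hj] //=; by rewrite addr0.
Qed.

Lemma scalar2 (z : F) : z%:M = mx2 z 0 0 z.
Proof.
apply/matrixP => i j; rewrite !mxE.
by case: i => [[|[|i]] Hi] //; case: j => [[|[|j]] Hj].
Qed.

Lemma det2 (a b c d : F) : \det (mx2 a b c d) = a * d - b * c.
Proof.
rewrite (expand_det_row _ ord0) !big_ord_recl big_ord0 /cofactor !det_mx11 !mxE /=.
by rewrite /bump /=; rewrite expr0 expr1 !mul1r addr0 mulN1r mulrN.
Qed.
End M.

Section V.
Variables (F : fieldType) (v : F -> int) (pi : F).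
Hypothesis hv : is_discrete_valuation v pi.

Lemma vM x y : x != 0 -> y != 0 -> v (x * y) = v x + v y.
Proof. by move: hv; rewrite /is_discrete_valuation => -[H _ _ _]; apply: H. Qed.
Arguments vM {x y}.
Lemma pi_neq0 : pi != 0. Proof. by move: hv; rewrite /is_discrete_valuation; case. Qed.
Lemma vpi : v pi = 1. Proof. by move: hv; rewrite /is_discrete_valuation; case. Qed.
Lemma vmin x y : x != 0 -> y != 0 -> x + y != 0 -> (v x <= v (x + y)) || (v y <= v (x + y)).
Proof. move: hv; rewrite /is_discrete_valuation => -[_ H _ _] hx hy hxy; by rewrite -ge_min; apply: H. Qed.
Arguments vmin {x y}.

Lemma v1 : v 1 = 0.
Proof. have h : (1:F) != 0 by apply: oner_neq0.
have := vM h h; rewrite mulr1 => h1; lia. Qed.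
Lemma vN1 : v (-1) = 0.
Proof.
have h1 : (-1 : F) != 0 by rewrite oppr_eq0 oner_neq0.
have := vM h1 h1; rewrite mulrNN mulr1 v1 => h; lia.
Qed.
Lemma vN x : x != 0 -> v (- x) = v x.
Proof.
move=> hx; rewrite -mulN1r vM ?vN1 ?add0r //; by rewrite oppr_eq0 oner_neq0.
Qed.
Lemma vV x : x != 0 -> v x^-1 = - v x.
Proof.
move=> hx; have := vM hx (invr_neq0 hx); rewrite mulfV // v1 => h; lia.
Qed.
Lemma vX (m : nat) : v (pi ^+ m) = m%:Z.
Proof.
elim: m => [|m IH]; first by rewrite expr0 v1.
rewrite exprS vM ?vpi ?IH ?expf_neq0 ?pi_neq0 //; lia.
Qed.
Lemma vXz (t : int) : v (pi ^ t) = t.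
Proof.
case: t => m /=; first by rewrite vX.
rewrite vV ?expf_neq0 ?pi_neq0 // vX NegzE; lia.
Qed.

Lemma vlt x y : x != 0 -> y != 0 -> v x < v y -> x + y != 0 /\ v (x + y) = v x.
Proof.
move=> hx hy hlt.
have hxy : x + y != 0.
  apply/negP => /eqP h; have : y = - x by rewrite -(addKr x y) h addr0.
  move=> hy'; rewrite hy' vN // in hlt; lia.
split => //.
have e : x = (x + y) + (- y) by rewrite addrK.
have hny : - y != 0 by rewrite oppr_eq0.
have hx' : x + y + - y != 0 by rewrite -e.
have h2 := vmin hxy hny hx'.
rewrite -e vN // in h2.
have h1 := vmin hx hy hxy.
move: h1 h2 => /orP [h1|h1] /orP [h2|h2]; lia.
Qed.
Arguments vlt {x y}.

Lemma inP0 j : inP v j 0. Proof. by rewrite /inP eqxx. Qed.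
Lemma inPE j x : x != 0 -> inP v j x = (j <= v x).
Proof. by move=> hx; rewrite /inP (negbTE hx). Qed.
Lemma inPN j x : inP v j x -> inP v j (- x).
Proof.
rewrite /inP oppr_eq0; case: (eqVneq x 0) => //= hx; by rewrite vN.
Qed.
Lemma inPD j x y : inP v j x -> inP v j y -> inP v j (x + y).
Proof.
case: (eqVneq x 0) => [->|hx]; first by rewrite add0r.
case: (eqVneq y 0) => [->|hy]; first by rewrite addr0.
case: (eqVneq (x + y) 0) => [->|hxy]; first by rewrite inP0.
rewrite !inPE // => h1 h2; move: (vmin hx hy hxy) => /orP [] h; [exact: le_trans h1 h|exact: le_trans h2 h].
Qed.
Lemma inPB j x y : inP v j x -> inP v j y -> inP v j (x - y).
Proof. by move=> h1 h2; apply: inPD => //; apply: inPN. Qed.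

Lemma inPMl i k x y : inP v i x -> inP v k y -> inP v (i + k) (x * y).
Proof.
case: (eqVneq x 0) => [->|hx]; first by move=> *; rewrite mul0r inP0.
case: (eqVneq y 0) => [->|hy]; first by move=> *; rewrite mulr0 inP0.
rewrite !inPE ?mulf_neq0 // vM // => h1 h2; lia.
Qed.
Lemma inP_le i j x : i <= j -> inP v j x -> inP v i x.
Proof.
case: (eqVneq x 0) => [->|hx]; first by move=> *; rewrite inP0.
rewrite !inPE // => h1 h2; lia.
Qed.
Lemma inPM i k j x y : inP v i x -> inP v k y -> i + k >= j -> inP v j (x * y).
Proof. move=> h1 h2 h3; apply: inP_le h3 _; exact: inPMl. Qed.

Lemma unitP x : isUnitO v x = (x != 0) && (v x == 0). Proof. by []. Qed.
Lemma unit_inO x : isUnitO v x -> inO v x.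
Proof. by rewrite /isUnitO /inO => /andP [hx /eqP h]; rewrite inPE // h. Qed.
Lemma unit_notp x : isUnitO v x -> ~~ inP v 1 x.
Proof. by rewrite /isUnitO => /andP [hx /eqP h]; rewrite inPE // h. Qed.
Lemma inO_split x : inO v x -> isUnitO v x || inP v 1 x.
Proof.
rewrite /isUnitO /inO; case: (eqVneq x 0) => [->|hx]; first by move=> _; rewrite inP0 orbT.
rewrite !inPE //= => h; apply/orP; case: (eqVneq (v x) 0) => h'; [by left|right; lia].
Qed.
Lemma unitM x y : isUnitO v x -> isUnitO v y -> isUnitO v (x * y).
Proof.
rewrite /isUnitO => /andP [hx /eqP h1] /andP [hy /eqP h2].
by rewrite mulf_neq0 // vM // h1 h2.
Qed.
Lemma unitN x : isUnitO v x -> isUnitO v (- x).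
Proof. by rewrite /isUnitO oppr_eq0 => /andP [hx h]; rewrite hx vN. Qed.
Lemma unitV x : isUnitO v x -> isUnitO v x^-1.
Proof.
rewrite /isUnitO => /andP [hx /eqP h]; by rewrite invr_eq0 hx vV // h.
Qed.
Lemma unit1 : isUnitO v 1. Proof. by rewrite /isUnitO oner_neq0 v1. Qed.
Lemma unitD x y : isUnitO v x -> inP v 1 y -> isUnitO v (x + y).
Proof.
move=> hu; case: (eqVneq y 0) => [->|hy]; first by rewrite addr0.
move: hu; rewrite /isUnitO inPE // => /andP [hx /eqP h1] h2.
have hl : v x < v y by rewrite h1; lia.
have [h3 h4] := vlt hx hy hl. by rewrite h3 h4 h1.
Qed.
Lemma vlt' j x y : x != 0 -> inP v j y -> v x < j -> x + y != 0 /\ v (x + y) = v x.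
Proof.
move=> hx; case: (eqVneq y 0) => [->|hy]; first by rewrite addr0.
rewrite inPE // => h1 h2; apply: vlt => //; lia.
Qed.
Arguments vlt' {j x y}.
Lemma inOM x y : inO v x -> inO v y -> inO v (x * y).
Proof. by move=> h1 h2; apply: (inPM h1 h2); rewrite addr0. Qed.

Lemma inO_inP0 x : inO v x = inP v 0 x. Proof. by []. Qed.

Lemma unit_det a b c d : inO v a -> inO v d -> inP v 1 (b * c) ->
  isUnitO v (a * d - b * c) -> isUnitO v a && isUnitO v d.
Proof.
move=> ha hd hbc hu.
have e : a * d = (a * d - b * c) + b * c by rewrite subrK.
have : isUnitO v (a * d) by rewrite e; apply: unitD.
rewrite /isUnitO mulf_eq0 negb_or => /andP [/andP [ha0 hd0] /eqP h].
rewrite ha0 hd0 /=; move: ha hd; rewrite /inO !inPE // => ha hd.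
rewrite vM // in h; apply/andP; split; apply/eqP; lia.
Qed.

Lemma unit_c a b c d : inO v a -> inO v b -> inO v c -> inP v 1 d ->
  isUnitO v (a * d - b * c) -> isUnitO v c.
Proof.
move=> ha hb hc hd hu; move: (inO_split hc) => /orP [] // hc1.
have h1 : inP v 1 (a * d) by apply: (inPM ha hd); rewrite add0r.
have h2 : inP v 1 (b * c) by apply: (inPM hb hc1); rewrite add0r.
by move: (unit_notp hu); rewrite (inPB h1 h2).
Qed.

Lemma entries_inO (A : 'M[F]_2) : inK v A ->
  [/\ inO v (e00 A), inO v (e01 A), inO v (e10 A) & inO v (e11 A)].
Proof. by case. Qed.

Lemma detK (A : 'M[F]_2) : \det A = e00 A * e11 A - e01 A * e10 A.
Proof. by rewrite {1}(mx2_eta A) det2. Qed.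

Lemma NoK0p_iff (k : 'M[F]_2) : inK v k -> (in_NoK0p v k <-> isUnitO v (e11 k)).
Proof.
move=> hk; split.
- move=> [x [k0 [hx [hk0 hb0] ->]]].
  rewrite (mx2_eta k0) /nmx mulmx2 e_mx2.
  case: hk0 => ha hb hc hd hdet; rewrite detK in hdet.
  rewrite mul0r add0r mul1r.
  by have /andP [] := unit_det ha hd (inPM (hb0) hc (le_refl _)) hdet.
- move=> hu; have hd0 : e11 k != 0 by move: hu => /andP [].
  have hdi : inO v (e11 k)^-1 by apply/unit_inO/unitV.
  case: (hk) => ha hb hc hd hdet.
  exists (e01 k / e11 k), (mx2 (e00 k - e01 k * e10 k / e11 k) 0 (e10 k) (e11 k)).
  split.
  + exact: inOM.
  + split; last by rewrite e_mx2 inP0.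
    split; rewrite ?e_mx2 //; try by rewrite /inO inP0.
    * by apply: inPB => //; apply: inOM => //; apply: inOM.
    * rewrite detK in hdet; rewrite det2.
      have -> : (e00 k - e01 k * e10 k / e11 k) * e11 k - 0 * e10 k =
                e00 k * e11 k - e01 k * e10 k by field.
      done.
  + rewrite {1}(mx2_eta k) /nmx mulmx2; congr mx2; field => //.
Qed.

Lemma wK0p_iff (k : 'M[F]_2) : inK v k -> (in_wK0p v k <-> inP v 1 (e11 k)).
Proof.
move=> hk; split.
- move=> [k0 [[hk0 hb0] ->]].
  rewrite (mx2_eta k0) /wmx mulmx2 e_mx2.
  by rewrite mul0r addr0 mulN1r; apply: inPN.
- move=> hd1; case: (hk) => ha hb hc hd hdet.
  exists (mx2 (- e10 k) (- e11 k) (e00 k) (e01 k)); split.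
  + split; last by rewrite e_mx2; apply: inPN.
    split; rewrite ?e_mx2; try by apply: inPN.
    * by [].
    * by [].
    * rewrite detK in hdet; rewrite det2.
      have -> : - e10 k * e01 k - - e11 k * e00 k =
                e00 k * e11 k - e01 k * e10 k by ring.
      done.
  + rewrite {1}(mx2_eta k) /wmx mulmx2; congr mx2; ring.
Qed.

Lemma inP_piX (m : nat) : inP v m%:Z (pi ^+ m).
Proof. by rewrite inPE ?expf_neq0 ?pi_neq0 // vX. Qed.

Lemma level_bounds (n n1 : nat) (k : 'M[F]_2) t l :
  (1 <= n1)%N -> (n1 <= n)%N -> inK v k ->
  in_cell v pi n t l (k *m amx (pi ^+ n1)) ->
  (isUnitO v (e11 k) -> (n1 <= l)%N) /\ (inP v 1 (e11 k) -> (l < n1)%N).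
Proof.
move=> hn1 hn1n hk [z [x [u [k1 [hz hu hk1 hg]]]]].
have E := congr1 (@e10 F) hg; have E' := congr1 (@e11 F) hg.
move: E E'; rewrite {1 2}(mx2_eta k) /amx !mulmx2 !e_mx2.
rewrite scalar2 /nmx /wmx (mx2_eta k1) !mulmx2 !e_mx2.
set s := pi ^- l * u; set a := e00 k1; set b := e01 k1; set c := e10 k1; set d := e11 k1.
set C := e10 k * pi ^+ n1; set D := e11 k.
rewrite !mulr0 !mul0r !addr0 !add0r !mulr1 => EC ED.
have E1 : z * (a * d - b * c) = D * c - C * d.
  by rewrite EC ED; ring.
have E2 : z * s * (a * d - b * c) = C * b - D * a.
  by rewrite EC ED; ring.
case: hk1 => [[ha hb hc hd hdet1] [ha1 hc1]].
have hn : (1 <= n)%N by apply: leq_trans hn1 hn1n.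
have hc1' : inP v 1 c by apply: inP_le hc1; rewrite lez_nat.
rewrite detK -/a -/b -/c -/d in hdet1.
have hbc : inP v 1 (b * c) by apply: (inPM hb hc1'); rewrite add0r.
have /andP [hau hdu] := unit_det ha hd hbc hdet1.
set det1 := a * d - b * c in hdet1 E1 E2.
move: (hdet1) => /andP [hdet0 /eqP hvdet].
move: (hu) => /andP [hu0 /eqP hvu].
have hpl0 : pi ^- l != 0 by rewrite invr_eq0 expf_neq0 // pi_neq0.
have hs0 : s != 0 by rewrite mulf_neq0.
have hvs : v s = - l%:Z by rewrite /s vM // vV ?expf_neq0 ?pi_neq0 // vX hvu addr0.
have hzd0 : z * det1 != 0 by rewrite mulf_neq0.
have hzsd0 : z * s * det1 != 0 by rewrite !mulf_neq0.
have hvY : v (z * det1) = v z by rewrite vM // hvdet addr0.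
have hvX : v (z * s * det1) = v z - l%:Z by rewrite vM ?mulf_neq0 // vM // hvdet hvs addr0.
case: (hk) => hak hbk hck hdk hdetk.
have hC : inP v n1%:Z C by apply: (inPM hck (inP_piX n1)); rewrite add0r.
split.
- move=> hD.
  have hCb : inP v 1 (C * b) by apply: (inPM hC hb); rewrite addr0 lez_nat.
  have hDa0 : - (D * a) != 0.
    by rewrite oppr_eq0 mulf_neq0 //; [case/andP: hD | case/andP: hau].
  have hDav : v (- (D * a)) < 1.
    rewrite vN ?vM; [|by case/andP: hD|by case/andP: hau|by rewrite oppr_eq0 in hDa0].
    by move: hD hau => /andP [_ /eqP ->] /andP [_ /eqP ->].
  have [_ hXv] := vlt' hDa0 hCb hDav.
  have eX : - (D * a) + C * b = z * s * det1 by rewrite E2 addrC.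
  rewrite eX hvX in hXv.
  rewrite vN ?vM in hXv; [|by case/andP: hD|by case/andP: hau|by rewrite oppr_eq0 in hDa0].
  move: hD hau hXv => /andP [_ /eqP ->] /andP [_ /eqP ->] hXv.
  have hY : inP v n1%:Z (D * c - C * d).
    apply: inPB.
    + by apply: (inPM hdk hc1); rewrite add0r lez_nat.
    + by apply: (inPM hC hd); rewrite addr0.
  rewrite -E1 inPE // hvY in hY.
  clear -hXv hY; lia.
- move=> hD.
  have hcu : isUnitO v (e10 k) by apply: (unit_c hak hbk hck hD); rewrite -detK.
  move: (hcu) => /andP [hck0 /eqP hvck].
  move: (hdu) => /andP [hd0 /eqP hvd].
  have hpn0 : pi ^+ n1 != 0 by rewrite expf_neq0 // pi_neq0.
  have hC0 : C != 0 by rewrite mulf_neq0.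
  have hvC : v C = n1%:Z by rewrite /C vM // hvck vX add0r.
  have hCd0' : C * d != 0 by rewrite mulf_neq0.
  have hCd0 : - (C * d) != 0 by rewrite oppr_eq0.
  have hCdv : v (- (C * d)) < n1%:Z + 1 by rewrite vN // vM // hvC hvd addr0 ltzD1.
  have hDc : inP v (n1%:Z + 1) (D * c).
    by apply: (inPM hD hc1); rewrite addrC lerD2l lez_nat.
  have [_ hYv] := vlt' hCd0 hDc hCdv.
  have eY : - (C * d) + D * c = z * det1 by rewrite E1 addrC.
  rewrite eY hvY vN // vM // hvC hvd addr0 in hYv.
  have hX : inP v 1 (C * b - D * a).
    apply: inPB.
    + by apply: (inPM hC hb); rewrite addr0 lez_nat.
    + by apply: (inPM hD ha); rewrite addr0.
  rewrite -E2 inPE // hvX in hX.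
  clear -hYv hX; lia.
Qed.

Lemma piz_neq0 (t : int) : pi ^ t != 0.
Proof. by rewrite expfz_neq0 // pi_neq0. Qed.

Lemma mk_unit x : x != 0 -> v x = 0 -> isUnitO v x.
Proof. by move=> h1 h2; rewrite /isUnitO h1 h2 eqxx. Qed.

Ltac closeK hg :=
  rewrite ?e_mx2 ?det2 ?subrr ?mul1r ?mul0r ?mulr0 ?subr0; try done;
  try (by rewrite inP0); try (by rewrite /inO inP0);
  try (by rewrite /inO inPE ?oner_neq0 // v1); try (exact: unit_inO);
  try (by apply: inP_le hg; rewrite lez_nat).

Lemma inK1_lower n (g e : F) : isUnitO v e -> inP v n%:Z g -> inK1 v n (mx2 1 0 g e).
Proof. move=> he hg; split; [split|split]; closeK hg. Qed.

Lemma inK1_upper n (b e : F) : isUnitO v e -> inO v b -> inK1 v n (mx2 1 b 0 e).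
Proof. move=> he hg; split; [split|split]; closeK hg. Qed.

Lemma cell_form z x y s (a b c d : F) :
  z%:M *m nmx x *m amx y *m wmx F *m nmx s *m mx2 a b c d =
  mx2 (z * (- x * a + (y - x * s) * c)) (z * (- x * b + (y - x * s) * d))
      (z * (- a - s * c)) (z * (- b - s * d)).
Proof. rewrite scalar2 /nmx /amx /wmx !mulmx2; congr mx2; ring. Qed.

Lemma cell_generic n (A B C D : F) (l : nat) :
  A * D - B * C != 0 -> C != 0 -> D != 0 -> v C - v D = l%:Z -> (l <= n)%N ->
  exists t, in_cell v pi n t l (mx2 A B C D).
Proof.
move=> hdet hC hD hl hln.
pose t := v (A * D - B * C) - v C - v C.
pose e := (A * D - B * C) / (C * C * pi ^ t).
have hCC : C * C * pi ^ t != 0 by rewrite !mulf_neq0 // piz_neq0.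
have he0 : e != 0 by rewrite mulf_neq0 // invr_eq0.
have hve : v e = 0.
  rewrite /e (vM hdet (invr_neq0 hCC)) (vV hCC) (vM (mulf_neq0 hC hC) (piz_neq0 t)).
  by rewrite (vM hC hC) vXz /t; clear; lia.
pose s := D / (e * C).
have hs0 : s != 0 by rewrite mulf_neq0 // invr_eq0 mulf_neq0.
have hvs : v s = v D - v C.
  have heC : e * C != 0 by rewrite mulf_neq0.
  by rewrite /s (vM hD (invr_neq0 heC)) (vV heC) (vM he0 hC) hve; clear; lia.
pose u := pi ^+ l * s.
have hpl : pi ^+ l != 0 by rewrite expf_neq0 // pi_neq0.
exists t, (- C), (A / C), u, (mx2 1 0 0 e); split.
- by rewrite oppr_eq0.
- apply: mk_unit; first by rewrite mulf_neq0.
  rewrite /u (vM hpl hs0) vX hvs; move: hl; clear; lia.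
- by apply: inK1_lower; [exact: mk_unit | exact: inP0].
- have -> : pi ^- l * u = s by rewrite /u mulKf.
  rewrite cell_form /s /e; congr mx2; field; by rewrite ?piz_neq0 ?hC ?hdet.
Qed.

Lemma cell_small n (A B C D : F) :
  A * D - B * C != 0 -> C != 0 -> (D = 0 \/ v C <= v D) ->
  exists t, in_cell v pi n t 0 (mx2 A B C D).
Proof.
move=> hdet hC hDC.
pose t := v (A * D - B * C) - v C - v C.
pose e := (A * D - B * C) / (C * C * pi ^ t).
have hCC : C * C * pi ^ t != 0 by rewrite !mulf_neq0 // piz_neq0.
have he0 : e != 0 by rewrite mulf_neq0 // invr_eq0.
have hve : v e = 0.
  rewrite /e (vM hdet (invr_neq0 hCC)) (vV hCC) (vM (mulf_neq0 hC hC) (piz_neq0 t)).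
  by rewrite (vM hC hC) vXz /t; clear; lia.
exists t, (- C), (A / C), 1, (mx2 1 (D / C - e) 0 e); split.
- by rewrite oppr_eq0.
- exact: unit1.
- apply: inK1_upper; first exact: mk_unit.
  apply: inPB; last by apply: unit_inO; apply: mk_unit.
  case: hDC => [->|hle]; first by rewrite mul0r /inO inP0.
  case: (eqVneq D 0) => [->|hD]; first by rewrite mul0r /inO inP0.
  rewrite /inO inPE ?mulf_neq0 ?invr_eq0 // (vM hD (invr_neq0 hC)) (vV hC).
  by move: hle; clear; lia.
- rewrite expr0 invr1 mulr1 cell_form /e; congr mx2; field; by rewrite ?piz_neq0 ?hC ?hdet.
Qed.

Lemma cell_big n (A B C D : F) :
  A * D - B * C != 0 -> D != 0 -> (C = 0 \/ n%:Z < v C - v D) ->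
  exists t, in_cell v pi n t n (mx2 A B C D).
Proof.
move=> hdet hD hCD.
pose P := pi ^+ n.
have hP : P != 0 by rewrite expf_neq0 // pi_neq0.
pose t := v (A * D - B * C) - v D - v D - n%:Z - n%:Z.
pose e := pi ^ t * (D * D) * (P * P) / (A * D - B * C).
have he0 : e != 0 by rewrite !mulf_neq0 ?invr_eq0 ?piz_neq0.
have hve : v e = 0.
  rewrite /e (vM _ (invr_neq0 hdet)); last by rewrite !mulf_neq0 ?piz_neq0.
  rewrite (vV hdet) (vM _ (mulf_neq0 hP hP)); last by rewrite !mulf_neq0 ?piz_neq0.
  rewrite (vM (piz_neq0 t) (mulf_neq0 hD hD)) (vM hP hP) (vM hD hD) vXz /P vX /t.
  by clear; lia.
pose g := e * C / D - P.
exists t, (- (D * P / e)), ((A * e - B * g) / (D * P)), 1, (mx2 1 0 g e); split.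
- by rewrite oppr_eq0 !mulf_neq0 ?invr_eq0.
- exact: unit1.
- apply: inK1_lower; first exact: mk_unit.
  apply: inPB; last exact: inP_piX.
  case: hCD => [->|hlt]; first by rewrite mulr0 mul0r inP0.
  case: (eqVneq C 0) => [->|hC]; first by rewrite mulr0 mul0r inP0.
  have heC : e * C != 0 by rewrite mulf_neq0.
  have hq : e * C / D != 0 by rewrite mulf_neq0 ?invr_eq0.
  rewrite (inPE _ hq) (vM (x := e * C) (y := D^-1)) ?invr_eq0 // (vV hD).
  by rewrite (vM (x := e) (y := C)) // hve; move: hlt; clear; lia.
- rewrite mulr1 cell_form /g /e /P; congr mx2; field;
    by rewrite ?piz_neq0 ?hD ?hdet ?expf_neq0 ?pi_neq0.
Qed.
Lemma exists_cell n (g : 'M[F]_2) : \det g != 0 -> exists l, has_l v pi n g l.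
Proof.
move=> hdet; rewrite (mx2_eta g) in hdet *; rewrite det2 in hdet.
move: (e00 g) (e01 g) (e10 g) (e11 g) hdet => A B C D hdet.
case: (eqVneq C 0) => hC.
  have hD : D != 0.
    by apply: contraNneq hdet => hD; rewrite hC hD !mulr0 subrr.
  have [t ht] := @cell_big n A B C D hdet hD (or_introl hC).
  by exists n; split => //; exists t.
case: (eqVneq D 0) => hD.
  have [t ht] := @cell_small n A B C D hdet hC (or_introl hD).
  by exists 0%N; split => //; exists t.
case: (leP 0 (v C - v D)) => h0.
  case: (leP (v C - v D) n%:Z) => h1.
    have [l hl] : exists l : nat, v C - v D = l%:Z.
      by exists `|v C - v D|%N; rewrite gez0_abs.
    have hln : (l <= n)%N by rewrite -lez_nat -hl.
    have [t ht] := @cell_generic n A B C D l hdet hC hD hl hln.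
    by exists l; split => //; exists t.
  have [t ht] := @cell_big n A B C D hdet hD (or_intror h1).
  by exists n; split => //; exists t.
have hle : v C <= v D by move: h0; clear; lia.
have [t ht] := @cell_small n A B C D hdet hC (or_intror hle).
by exists 0%N; split => //; exists t.
Qed.

End V.

Theorem lemma2p1 (F : fieldType) (v : F -> int) (pi : F)
  (hF : nonarch_local_field_char0 v pi)
  (n : nat) (hn : odd n) (k : 'M[F]_2) (hk : inK v k) :
  let n1 := uphalf n in
  let n0 := n./2 in
  let g := k *m amx (pi ^+ n1) in
  (exists l, has_l v pi n g l) /\
  (forall l : nat, has_l v pi n g l ->
     ((n1 <= l)%N <-> in_NoK0p v k) /\ ((l <= n0)%N <-> in_wK0p v k)).
Proof.
move=> n1 n0 g.
have hv : is_discrete_valuation v pi by case: hF.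
have hn10 : n1 = n0.+1 by rewrite /n1 /n0 uphalf_half hn.
have hn1 : (1 <= n1)%N by rewrite hn10.
have hn1n : (n1 <= n)%N.
  rewrite hn10 /n0; move: hn; clear; rewrite -{3}(odd_double_half n) => ->.
  by rewrite add1n ltnS -addnn leq_addr.
have hdet : \det g != 0.
  rewrite /g det_mulmx /amx det2 mulr1 mul0r subr0 mulf_neq0 ?expf_neq0 ?(pi_neq0 hv) //.
  by case: hk => _ _ _ _ /andP [].
split; first exact: exists_cell.
move=> l [hln [t hcell]].
have [H1 H2] := level_bounds hv hn1 hn1n hk hcell.
have hdk : inO v (e11 k) by case: hk.
have hsplit := inO_split hdk.
have excl : isUnitO v (e11 k) -> ~~ inP v 1 (e11 k) by apply: unit_notp.
rewrite (NoK0p_iff hv hk) (wK0p_iff hv hk).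
split; split.
- move=> hl; case/orP: hsplit => // hp.
  by have := H2 hp; rewrite ltnNge hl.
- exact: H1.
- move=> hl; case/orP: hsplit => // hu.
  by have := H1 hu; rewrite hn10 ltnNge hl.
- by move=> hp; have := H2 hp; rewrite hn10 ltnS.
Qed.
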